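(* Consider an MWSBP instance with $s_i=w_i$ for all $i$, and let $W_1\ge W_2\ge\cdots\ge W_p$ be the weights of the bins output by WFFI-R. If $p\ge 2$ and $W_{p-1}>\frac23$, then the cost of the WFFI-R output is at most $\frac32\cdot\mathtt{OPT}$.
   Context: Min-Weighted Sum Bin Packing (MWSBP): an instance consists of $n$ items with sizes $s_i\in(0,1]$ and weights $w_i>0$. A feasible solution is a partition of $[n]$ into bins $B_1,\ldots,B_p$ with $\sum_{i\in B_k}s_i\le 1$; its cost is $\sum_{k=1}^p k\sum_{i\in B_k}w_i$; $\mathtt{OPT}$ is the minimum cost. The WFFI-R algorithm: sort the items in nondecreasing order of $s_i/w_i$ (ties broken arbitrarily); process them with First-Fit, i.e., put each item into the earliest-opened bin in which it still fits, opening a new bin if it fits in none; finally, reorder the bins in nonincreasing order of total weight. Its cost is $\sum_{k=1}^p k W_k$. *)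

(* Defs.v *)
From HB Require Import structures.
From mathcomp Require Import all_boot all_order all_algebra.
Set Implicit Arguments. Unset Strict Implicit. Unset Printing Implicit Defensive.
Import Order.TTheory GRing.Theory Num.Theory.
Local Open Scope ring_scope.

Section MWSBP.
Variables (R : realFieldType) (n : nat).
Variables (s w : 'I_n -> R).

Definition bin_size (b : seq 'I_n) : R := \sum_(j <- b) s j.
Definition bin_weight (b : seq 'I_n) : R := \sum_(j <- b) w j.

Definition feasible (B : seq (seq 'I_n)) : Prop :=
  perm_eq (flatten B) (enum 'I_n) /\
  (forall b, b \in B -> b != [::] /\ bin_size b <= 1).

Definition cost (B : seq (seq 'I_n)) : R :=
  \sum_(k < size B) (k.+1)%:R * bin_weight (nth [::] B k).

Fixpoint ff_insert (i : 'I_n) (bins : seq (seq 'I_n)) : seq (seq 'I_n) :=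
  match bins with
  | [::] => [:: [:: i]]
  | b :: bs => if bin_size b + s i <= 1 then rcons b i :: bs
               else b :: ff_insert i bs
  end.

Definition first_fit (order : seq 'I_n) : seq (seq 'I_n) :=
  foldl (fun bins i => ff_insert i bins) [::] order.

(* An admissible processing order for WFFI-R: all items, in nondecreasing
   order of s_i / w_i (ties broken arbitrarily). *)
Definition wffi_order (order : seq 'I_n) : bool :=
  perm_eq order (enum 'I_n) &&
  sorted (fun i j => s i / w i <= s j / w j) order.

Definition wffir (order : seq 'I_n) : seq (seq 'I_n) :=
  sort (fun b1 b2 => bin_weight b2 <= bin_weight b1) (first_fit order).

End MWSBP.

(* Main.v *)
Require Import Defs.
From HB Require Import structures.
From mathcomp Require Import all_boot all_order all_algebra.
From mathcomp Require Import ring lra zify.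
Import Order.TTheory GRing.Theory Num.Theory.
Local Open Scope ring_scope.

Section Aux.
Variable R : realFieldType.

Fixpoint lcost (xs : seq R) : R :=
  match xs with [::] => 0 | x :: xs' => \sum_(y <- xs) y + lcost xs' end.

Lemma lcost_lower (xs : seq R) :
  (forall x, x \in xs -> 0 <= x <= 1) ->
  let S := \sum_(y <- xs) y in S * (S + 1) / 2 <= lcost xs.
Proof.
elim: xs => [|x xs IH] H /=; first by rewrite big_nil; lra.
have [hx0 hx1] : 0 <= x /\ x <= 1 by have /andP[] := H x (mem_head _ _).
have IH' := IH (fun y hy => H y ltac:(by rewrite inE hy orbT)).
have hT : 0 <= \sum_(y <- xs) y.
  by rewrite big_seq; apply: sumr_ge0 => y hy; have /andP[] := H y ltac:(by rewrite inE hy orbT).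
move: IH' hT; rewrite big_cons; set T := \sum_(y <- xs) y => IH' hT.
have h1 : 0 <= x * (1 - x) by apply: mulr_ge0; lra.
have h2 : 0 <= T * (1 - x) by apply: mulr_ge0; lra.
cbv zeta in IH'. nra.
Qed.

Lemma lcost_upper (xs : seq R) :
  (forall k, (k.+1 < size xs)%N -> 2/3 <= nth 0 xs k) ->
  let p := (size xs)%:R in
  lcost xs <= p * \sum_(y <- xs) y - p * (p - 1) / 3.
Proof.
elim: xs => [|x xs IH] H /=; first by rewrite big_nil; lra.
have IH' := IH (fun k hk => H k.+1 hk).
move: IH'; rewrite big_cons; set T := \sum_(y <- xs) y => IH'; cbv zeta in IH'.
have h : (size xs)%:R * (2/3) <= (size xs)%:R * x :> R.
  case E: (size xs) => [|q]; first by rewrite !mul0r.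
  apply: ler_wpM2l; [exact: ler0n| apply: (H 0%N); by rewrite /= E].
rewrite -addn1 natrD /=.
move: IH' h; set q := (size xs)%:R => IH' h.
nra.
Qed.

End Aux.
Arguments lcost {R}.

Section Main.
Variables (R : realFieldType) (n : nat) (s w : 'I_n -> R).

Lemma cost_lcost (B : seq (seq 'I_n)) :
  cost w B = lcost (map (bin_weight w) B).
Proof.
elim: B => [|b B IH]; first by rewrite /cost big_ord0.
rewrite /cost /= big_ord_recl /= -IH /cost big_cons mul1r -addrA; congr (_ + _).
rewrite big_map (big_nth [::]) big_mkord -big_split /=.
apply: eq_bigr => k _; rewrite /bump leq0n add1n -addn1 natrD mulrDl mul1r addrC.
by [].
Qed.

Lemma sum_ff_insert i bins :
  \sum_(j <- flatten (ff_insert s i bins)) w j = w i + \sum_(j <- flatten bins) w j.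
Proof.
elim: bins => [|b bs IH] /=; first by rewrite big_cons !big_nil.
case: ifP => _ /=; rewrite !big_cat /=.
  by rewrite -cats1 big_cat big_seq1 /=; ring.
by rewrite IH; ring.
Qed.

Lemma sum_foldl ord bins :
  \sum_(j <- flatten (foldl (fun bins i => ff_insert s i bins) bins ord)) w j
  = \sum_(j <- flatten bins) w j + \sum_(j <- ord) w j.
Proof.
elim: ord bins => [|i ord IH] bins /=; first by rewrite big_nil addr0.
by rewrite IH sum_ff_insert big_cons addrCA addrA.
Qed.

Lemma sum_bins (B : seq (seq 'I_n)) :
  \sum_(y <- map (bin_weight w) B) y = \sum_(j <- flatten B) w j.
Proof. by rewrite big_map big_flatten. Qed.

End Main.

Theorem claim1 (R : realFieldType) (n : nat) (s w : 'I_n -> R)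
    (hs : forall i, 0 < s i <= 1) (hw : forall i, 0 < w i)
    (hsw : forall i, s i = w i)
    (order : seq 'I_n) (hord : wffi_order s w order) :
  let B := wffir s w order in
  (2 <= size B)%N ->
  2 / 3 < bin_weight w (nth [::] B (size B - 2)%N) ->
  forall B' : seq (seq 'I_n), feasible s B' ->
    cost w B <= 3 / 2 * cost w B'.
Proof.
move=> B hp hlast B' [hperm hbins].
set r := fun b1 b2 : seq 'I_n => bin_weight w b2 <= bin_weight w b1.
have hsortB : sorted r B.
  apply: sort_sorted => b1 b2; rewrite /r; exact: le_total.
have htr : transitive r by move=> b1 b2 b3; rewrite /r => h1 h2; exact: le_trans h2 h1.
have hrefl : reflexive r by move=> b; rewrite /r.
have SB : \sum_(y <- map (bin_weight w) B) y = \sum_(j <- enum 'I_n) w j.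
  rewrite big_map /B /wffir (perm_big (first_fit s order)); last by rewrite perm_sort. rewrite /bin_weight -big_flatten /=.
  rewrite /first_fit sum_foldl big_nil add0r.
  by apply: perm_big; case/andP: hord.
have SB' : \sum_(y <- map (bin_weight w) B') y = \sum_(j <- enum 'I_n) w j.
  by rewrite sum_bins; apply: perm_big.
set W := \sum_(j <- enum 'I_n) w j in SB SB'.
have hlo := @lcost_lower R (map (bin_weight w) B').
have hup := @lcost_upper R (map (bin_weight w) B).
rewrite SB' /= in hlo; rewrite SB size_map /= in hup.
rewrite !cost_lcost.
have Hlo : W * (W + 1) / 2 <= lcost [seq bin_weight w i | i <- B'].
  apply: hlo => x /mapP [b hb ->]; apply/andP; split.
    by apply: sumr_ge0 => j _; apply: ltW.
  have := (hbins b hb).2; rewrite /bin_size /bin_weight.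
  by under eq_bigr do rewrite hsw.
have Hup : lcost [seq bin_weight w i | i <- B] <=
     (size B)%:R * W - (size B)%:R * ((size B)%:R - 1) / 3.
  apply: hup => k hk; rewrite (nth_map [::]); last by lia.
  apply: le_trans (ltW hlast) _.
  have := sorted_leq_nth htr hrefl [::] hsortB; apply; rewrite ?inE; lia.
move: Hlo Hup; set p := (size B)%:R => Hlo Hup.
have hp2 : 2 <= p by rewrite /p (ler_nat R 2).
have hsq : 0 <= (W - (2/3 * p - 1/2)) ^+ 2 by apply: sqr_ge0.
rewrite expr2 in hsq.
nra.
Qed.
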